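(* Let $\mathcal{D}$ be any distribution on $\mathbb{R}^m\times\{-1,+1\}$, let $p,q>0$ and $\epsilon_p,\epsilon_q\ge0$, and let $f(\mathbf{x})=\operatorname{sign}(\mathbf{w}^T\mathbf{x}+b)$ for some $\mathbf{w}\in\mathbb{R}^m$, $b\in\mathbb{R}$. Let $S_p(\mathbf{x})=\{\mathbf{x}+\mathbf{r}:\|\mathbf{r}\|_p\le\epsilon_p\}$, $S_q(\mathbf{x})=\{\mathbf{x}+\mathbf{r}:\|\mathbf{r}\|_q\le\epsilon_q\}$ and $S_{\mathrm{affine}}(\mathbf{x})=\{\mathbf{x}+\mathbf{r}_1+\mathbf{r}_2:\beta\in[0,1],\ \|\mathbf{r}_1\|_p\le\beta\epsilon_p,\ \|\mathbf{r}_2\|_q\le(1-\beta)\epsilon_q\}$. Then $$\mathcal{R}^{\mathrm{max}}_{\mathrm{adv}}(f;S_p,S_q)=\mathcal{R}_{\mathrm{adv}}(f;S_{\mathrm{affine}}).$$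
   Context: $\|\mathbf{r}\|_p=(\sum_i|r_i|^p)^{1/p}$ (for $p=\infty$, $\max_i|r_i|$). $\operatorname{sign}(t)=+1$ for $t\ge0$ and $-1$ for $t<0$. Adversarial risk: $\mathcal{R}_{\mathrm{adv}}(f;S)=\Pr_{(\mathbf{x},y)\sim\mathcal{D}}[\exists\,\mathbf{x}'\in S(\mathbf{x}): f(\mathbf{x}')\neq y]$; $\mathcal{R}^{\mathrm{max}}_{\mathrm{adv}}(f;S_p,S_q)=\mathcal{R}_{\mathrm{adv}}(f;S_p\cup S_q)$ with $(S_p\cup S_q)(\mathbf{x})=S_p(\mathbf{x})\cup S_q(\mathbf{x})$. *)

(* Defs.v *)
From Stdlib Require Import Reals.
From mathcomp Require Import all_boot.
Set Implicit Arguments.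
Unset Strict Implicit.
Unset Printing Implicit Defensive.

Local Open Scope R_scope.

Definition vec (m : nat) := 'I_m -> R.

(* Exponent p of an l_p (quasi-)norm: a positive real, or infinity. *)
Inductive pexp := Pfin (p : R) | Pinf.
Definition pexp_pos (p : pexp) : Prop :=
  match p with Pfin r => 0 < r | Pinf => True end.

(* t^y for t >= 0, y > 0, with 0^y = 0 (Stdlib's Rpower 0 y is 1). *)
Definition rpow (t y : R) : R := if Rlt_dec 0 t then Rpower t y else 0.

Definition lp_norm (m : nat) (p : pexp) (r : vec m) : R :=
  match p with
  | Pfin p => rpow (\big[Rplus/0]_(i < m) rpow (Rabs (r i)) p) (/ p)
  | Pinf => \big[Rmax/0]_(i < m) Rabs (r i)
  end.

Definition sgn (t : R) : R := if Rle_dec 0 t then 1 else -1.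

Definition lin_clf (m : nat) (w : vec m) (b : R) (x : vec m) : R :=
  sgn (\big[Rplus/0]_(i < m) (w i * x i) + b).

Inductive label := LPos | LNeg.
Definition lab_val (y : label) : R := match y with LPos => 1 | LNeg => -1 end.

Definition pset (m : nat) := vec m -> vec m -> Prop.

Definition S_ball (m : nat) (p : pexp) (eps : R) : pset m :=
  fun x x' => exists r : vec m, lp_norm p r <= eps /\ x' = (fun i => x i + r i).

Definition S_affine (m : nat) (p q : pexp) (eps_p eps_q : R) : pset m :=
  fun x x' => exists (beta : R) (r1 r2 : vec m),
    0 <= beta <= 1 /\ lp_norm p r1 <= beta * eps_p /\
    lp_norm q r2 <= (1 - beta) * eps_q /\
    x' = (fun i => x i + r1 i + r2 i).

Definition S_union (m : nat) (S1 S2 : pset m) : pset m :=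
  fun x x' => S1 x x' \/ S2 x x'.

(* A distribution D on R^m x {-1,+1} is represented by the map assigning
   to each event its probability; no property of D is needed. *)
Definition distr (m : nat) := (vec m * label -> Prop) -> R.

Definition R_adv (m : nat) (D : distr m) (f : vec m -> R) (S : pset m) : R :=
  D (fun z => exists x', S z.1 x' /\ f x' <> lab_val z.2).

Definition R_adv_max (m : nat) (D : distr m) (f : vec m -> R) (Sp Sq : pset m) : R :=
  R_adv D f (S_union Sp Sq).

(* Main.v *)
Require Import Defs.
From Stdlib Require Import Reals Lra Psatz.
From Stdlib Require Import FunctionalExtensionality PropExtensionality Classical.
From mathcomp Require Import all_boot.
Local Open Scope R_scope.
Set Implicit Arguments.

Lemma Rabs_eq_0' x : Rabs x = 0 -> x = 0.
Proof. move=> H; case: (Req_dec x 0) => // /Rabs_no_R0. by []. Qed.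

Lemma rpow_pos t y : 0 <= rpow t y.
Proof. rewrite /rpow; case: Rlt_dec => /= H; [left; apply: exp_pos | lra]. Qed.

Lemma big_term_le (op : R -> R -> R) :
  (forall a b, 0 <= a -> 0 <= b -> a <= op a b /\ b <= op a b /\ 0 <= op a b) ->
  forall m (F : 'I_m -> R), (forall i, 0 <= F i) ->
  (0 <= \big[op/0]_(i < m) F i) /\ forall j, F j <= \big[op/0]_(i < m) F i.
Proof.
move=> Hop; elim=> [|m IH] F HF.
  split; first by rewrite big_ord0; lra.
  by case.
have [IH1 IH2] := IH (fun i => F (lift ord0 i)) (fun i => HF _).
rewrite big_ord_recl /=.
have [H1 [H2 H3]] := Hop _ _ (HF ord0) IH1.
split => // j.
case: (unliftP ord0 j) => [j' ->|->].
  by apply: Rle_trans (IH2 _) H2.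
exact: H1.
Qed.

Definition sdot m (w v : vec m) := \big[Rplus/0]_(i < m) (w i * v i).

Lemma sdot_add m (w u v : vec m) :
  sdot w (fun i => u i + v i) = sdot w u + sdot w v.
Proof.
rewrite /sdot; apply: (big_rec3 (fun a b c => a = b + c)); first lra.
move=> i a b c _ ->; ring.
Qed.

Lemma sdot_scale m (w v : vec m) c :
  sdot w (fun i => c * v i) = c * sdot w v.
Proof.
rewrite /sdot; apply: (big_rec2 (fun a b => a = c * b)); first lra.
move=> i a b _ ->; ring.
Qed.

Lemma sdot_zero m (w v : vec m) : (forall i, v i = 0) -> sdot w v = 0.
Proof.
move=> H; rewrite /sdot; apply: (big_rec (fun a => a = 0)) => // i a _ ->.
rewrite H; ring.
Qed.

Lemma rpow_scale c t p : 0 < c -> 0 <= t ->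
  rpow (c * t) p = rpow c p * rpow t p.
Proof.
move=> Hc Ht; rewrite /rpow.
case: (Rlt_dec 0 c) => /= // _.
case: (Rlt_dec 0 t) => /= Ht'.
  case: Rlt_dec => /= H; last by exfalso; apply: H; nra.
  by rewrite Rpower_mult_distr.
have -> : t = 0 by lra.
rewrite Rmult_0_r; case: Rlt_dec => /= H; lra.
Qed.

Lemma lp_norm_scale m (p : pexp) (r : vec m) c : pexp_pos p -> 0 < c ->
  lp_norm p (fun i => c * r i) = c * lp_norm p r.
Proof.
case: p => [p|] /= Hp Hc.
- have Hs : \big[Rplus/0]_(i < m) rpow (Rabs (c * r i)) p
            = rpow c p * \big[Rplus/0]_(i < m) rpow (Rabs (r i)) p.
    apply: (big_rec2 (fun a b => a = rpow c p * b)); first ring.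
    move=> i a b _ ->; rewrite Rabs_mult (Rabs_pos_eq c); last lra.
    rewrite rpow_scale //; last exact: Rabs_pos. ring.
  rewrite Hs; set S := \big[Rplus/0]_(i < m) _.
  have Hcp : rpow c p = Rpower c p by rewrite /rpow; case: Rlt_dec.
  rewrite Hcp /rpow.
  case: (Rlt_dec 0 S) => /= HS.
    have HcP : 0 < Rpower c p by apply: exp_pos.
    case: Rlt_dec => /= H; last by exfalso; apply: H; nra.
    rewrite -Rpower_mult_distr // Rpower_mult Rinv_r; last lra.
    by rewrite Rpower_1.
  case: Rlt_dec => /= H; last ring.
  exfalso; have HcP : 0 < Rpower c p by apply: exp_pos. nra.
- apply: (big_rec2 (fun a b => a = c * b)); first ring.
  move=> i a b _ ->; rewrite Rabs_mult (Rabs_pos_eq c); last lra.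
  rewrite RmaxRmult //; lra.
Qed.

Lemma lp_norm_zero m (p : pexp) : lp_norm p (fun _ : 'I_m => 0) = 0.
Proof.
case: p => [p|] /=.
- have -> : \big[Rplus/0]_(i < m) rpow (Rabs 0) p = 0.
    apply: (big_rec (fun a => a = 0)) => // i a _ ->.
    rewrite Rabs_R0 /rpow; case: Rlt_dec => /= H; lra.
  rewrite /rpow; case: Rlt_dec => /= H; lra.
- apply: (big_rec (fun a => a = 0)) => // i a _ ->.
  rewrite Rabs_R0 /Rmax; case: Rle_dec => /= H; lra.
Qed.

Lemma lp_norm_le0 m (p : pexp) (r : vec m) : pexp_pos p ->
  lp_norm p r <= 0 -> forall i, r i = 0.
Proof.
case: p => [p|] /= Hp H i.
- set S := \big[Rplus/0]_(i < m) _ in H.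
  have HS : S <= 0.
    move: H; rewrite /rpow; case: Rlt_dec => /= H1 H2; last lra.
    have := exp_pos (/ p * ln S); rewrite /Rpower in H2; lra.
  have [_ Hb] := @big_term_le Rplus
     ltac:(move=> a b ? ?; lra) m (fun i => rpow (Rabs (r i)) p)
     (fun i => rpow_pos _ _).
  have := Hb i; rewrite -/S.
  rewrite /rpow; case: Rlt_dec => /= H1 H2.
    have := exp_pos (p * ln (Rabs (r i))); rewrite /Rpower in H2; lra.
  have := Rabs_pos (r i); move=> H3.
  have H4 : Rabs (r i) = 0 by lra.
  by apply: Rabs_eq_0'.
- have [_ Hb] := @big_term_le Rmax
     ltac:(move=> a b ? ?; split; [apply: Rmax_l | split; [apply: Rmax_r|
           apply: Rle_trans (Rmax_l _ _)]] => //) m (fun i => Rabs (r i))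
     (fun i => Rabs_pos _).
  have := Hb i; have := Rabs_pos (r i) => H1 H2.
  simpl in *; apply: Rabs_eq_0'; lra.
Qed.

Lemma lin_clf_sdot m (w : vec m) b x : lin_clf w b x = sgn (sdot w x + b).
Proof. by []. Qed.

Lemma misc_iff y t : sgn t <> lab_val y <->
  (if y is LPos then t < 0 else 0 <= t).
Proof.
rewrite /sgn; case: y => /=; case: Rle_dec => /= H; split => H'; try lra.
Qed.

Theorem claim3 (m : nat) (D : distr m) (p q : pexp) (eps_p eps_q : R)
  (w : vec m) (b : R) :
  pexp_pos p -> pexp_pos q -> 0 <= eps_p -> 0 <= eps_q ->
  R_adv_max D (lin_clf w b) (S_ball p eps_p) (S_ball q eps_q)
  = R_adv D (lin_clf w b) (S_affine p q eps_p eps_q).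
Proof.
move=> Hp Hq Hep Heq.
rewrite /R_adv_max /R_adv; f_equal.
apply: functional_extensionality => -[x y] /=.
apply: propositional_extensionality; split.
- move=> [x' [[[r [Hr ->]]|[r [Hr ->]]] Hf]].
  + exists (fun i => x i + r i); split => //.
    exists 1, r, (fun _ => 0); split; first lra.
    split; first lra. split; first by rewrite lp_norm_zero; lra.
    by apply: functional_extensionality => i; ring.
  + exists (fun i => x i + r i); split => //.
    exists 0, (fun _ => 0), r; split; first lra.
    split; first by rewrite lp_norm_zero; lra. split; first lra.
    by apply: functional_extensionality => i; ring.
- move=> [x' [[beta [r1 [r2 [Hb [H1 [H2 ->]]]]]] Hf]].
  case: (Req_dec beta 0) => Hb0.
    have Hz := @lp_norm_le0 m p r1 Hp (ltac:(rewrite Hb0 in H1; lra) : lp_norm p r1 <= 0).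
    exists (fun i => x i + r2 i); split.
      right; exists r2; split => //; rewrite Hb0 in H2; lra.
    have -> : (fun i => x i + r2 i) = (fun i => x i + r1 i + r2 i) => //.
    by apply: functional_extensionality => i; rewrite Hz; ring.
  case: (Req_dec beta 1) => Hb1.
    have Hz := @lp_norm_le0 m q r2 Hq (ltac:(rewrite Hb1 in H2; lra) : lp_norm q r2 <= 0).
    exists (fun i => x i + r1 i); split.
      left; exists r1; split => //; rewrite Hb1 in H1; lra.
    have -> : (fun i => x i + r1 i) = (fun i => x i + r1 i + r2 i) => //.
    by apply: functional_extensionality => i; rewrite Hz; ring.
  have Hbp : 0 < beta by lra.
  have Hbq : 0 < 1 - beta by lra.
  set a := fun i => x i + / beta * r1 i.
  set c := fun i => x i + / (1 - beta) * r2 i.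
  have Ha : lp_norm p (fun i => / beta * r1 i) <= eps_p.
    rewrite lp_norm_scale //; last by apply: Rinv_0_lt_compat.
    apply: (Rmult_le_reg_l beta) => //.
    rewrite -Rmult_assoc Rinv_r; lra.
  have Hc : lp_norm q (fun i => / (1 - beta) * r2 i) <= eps_q.
    rewrite lp_norm_scale //; last by apply: Rinv_0_lt_compat.
    apply: (Rmult_le_reg_l (1 - beta)) => //.
    rewrite -Rmult_assoc Rinv_r; lra.
  have Ea : sdot w a = sdot w x + / beta * sdot w r1
    by rewrite /a sdot_add sdot_scale.
  have Ec : sdot w c = sdot w x + / (1 - beta) * sdot w r2
    by rewrite /c sdot_add sdot_scale.
  have Ex : sdot w (fun i => x i + r1 i + r2 i) = sdot w x + sdot w r1 + sdot w r2.
    by rewrite (sdot_add w (fun i => x i + r1 i) r2) sdot_add.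
  have Ecomb : sdot w (fun i => x i + r1 i + r2 i) + b
      = beta * (sdot w a + b) + (1 - beta) * (sdot w c + b).
    rewrite Ex Ea Ec; field; lra.
  move: Hf; rewrite lin_clf_sdot misc_iff Ecomb => Hf.
  have [Hma | Hma] := classic (sgn (sdot w a + b) <> lab_val y).
    exists a; split; last exact: Hma.
    by left; exists (fun i => / beta * r1 i).
  have [Hmc | Hmc] := classic (sgn (sdot w c + b) <> lab_val y).
    exists c; split; last exact: Hmc.
    by right; exists (fun i => / (1 - beta) * r2 i).
  exfalso.
  have Ha' : ~ (if y is LPos then sdot w a + b < 0 else 0 <= sdot w a + b)
    by move=> H; apply: Hma; apply/misc_iff.
  have Hc' : ~ (if y is LPos then sdot w c + b < 0 else 0 <= sdot w c + b)
    by move=> H; apply: Hmc; apply/misc_iff.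
  clear Hma Hmc; case: y Hf Ha' Hc' => /= Hf Ha' Hc'.
  + have : 0 <= sdot w a + b by lra.
    have : 0 <= sdot w c + b by lra.
    nra.
  + have : sdot w a + b < 0 by lra.
    have : sdot w c + b < 0 by lra.
    nra.
Qed.
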